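(* Let $n\ge2$ and $0<c\le\frac1n$. Set $\delta=\frac1n+\frac{\sqrt{-(n^2-1)(c^4-c^2)}}{n(c^2-1)}$. Then $0\le\delta<\frac1n$, and the set $\mathcal P^\delta$ of columns of the matrix $P^\delta$ (with $[P^\delta]_1=d_1$ and $[P^\delta]_i=\alpha(d_i+\delta e_1)$ for $2\le i\le n+1$, $\alpha=\frac{n}{\sqrt{n^2\delta^2-2n\delta+n^2}}$, where $[d_1\ \cdots\ d_{n+1}]$ is the canonical uniform simplex) is a positive basis of $\mathbb R^n$ with cosine measure $c$.
   Context: The canonical uniform simplex is the $n\times(n+1)$ matrix defined as follows, with $a_i=\sqrt{\frac{(n-i+1)(n+1)}{n(n-i+2)}}$ for $i=1,\dots,n$: for $1\le j\le n$, column $j$ has entry $-\frac{a_i}{n-i+1}$ in row $i<j$, entry $a_j$ in row $j$, and $0$ in rows $i>j$; column $n+1$ has entry $-\frac{a_i}{n-i+1}$ in every row $i$. A finite set $\mathcal P$ is a positive basis if its positive span $\{\sum\lambda_id_i:\lambda_i\ge0\}$ is $\mathbb R^n$ and no $d\in\mathcal P$ lies in the positive span of $\mathcal P\setminus\{d\}$. The cosine measure of a finite $\mathcal S\subset\mathbb R^n\setminus\{\mathbf 0\}$ is $\min_{\|u\|=1}\max_{d\in\mathcal S}\frac{d^\top u}{\|d\|}$. *)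

(* Defs.v *)
From HB Require Import structures.
From mathcomp Require Import all_boot all_order all_algebra.
From mathcomp Require Import reals.
Set Implicit Arguments. Unset Strict Implicit. Unset Printing Implicit Defensive.
Import Order.TTheory GRing.Theory Num.Theory.
Local Open Scope ring_scope.

Section Defs.
Variable R : realType.

Definition dotv (n : nat) (u v : 'cV[R]_n) : R := \sum_(k < n) u k 0 * v k 0.
Definition normv (n : nat) (u : 'cV[R]_n) : R := Num.sqrt (dotv u u).

Definition pos_span (n m : nat) (f : 'I_m -> 'cV[R]_n) (P : pred 'I_m)
  (v : 'cV[R]_n) : Prop :=
  exists lam : 'I_m -> R, (forall i, 0 <= lam i) /\ v = \sum_(i < m | P i) lam i *: f i.

(* The SET {f i | i} is a positive basis of R^n:
   its positive span is R^n and no element d lies in the positive span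
   of the set minus d (i.e. of the f j with f j <> d). *)
Definition positive_basis (n m : nat) (f : 'I_m -> 'cV[R]_n) : Prop :=
  (forall v : 'cV[R]_n, pos_span f predT v) /\
  (forall i : 'I_m, ~ pos_span f (fun j => f j != f i) (f i)).

Definition cos_max (n m : nat) (f : 'I_m.+1 -> 'cV[R]_n) (u : 'cV[R]_n) : R :=
  let g := fun i => dotv (f i) u / normv (f i) in
  \big[Num.max/g ord0]_(i < m.+1) g i.

(* "the cosine measure of the set {f i} equals c", i.e.
   min_{||u||=1} max_i (f i)^T u / ||f i|| = c  (minimum attained and equal to c) *)
Definition cosine_measure_is (n m : nat) (f : 'I_m.+1 -> 'cV[R]_n) (c : R) : Prop :=
  (exists u : 'cV[R]_n, normv u = 1 /\ cos_max f u = c) /\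
  (forall u : 'cV[R]_n, normv u = 1 -> c <= cos_max f u).

(* a_i, with 0-based row index i0 = i - 1:  a_i = sqrt((n-i+1)(n+1)/(n(n-i+2))) *)
Definition simplex_a (n : nat) (i0 : nat) : R :=
  Num.sqrt (((n - i0)%:R * n.+1%:R) / (n%:R * (n - i0).+1%:R)).

(* canonical uniform simplex, n x (n+1), 0-based indices:
   entry (i,j) = -a_i/(n-i+1) if i<j (1-based), a_j if i=j, 0 if i>j;
   the last column (j = n, 0-based) has -a_i/(n-i+1) in every row. *)
Definition unif_simplex (n : nat) : 'M[R]_(n, n.+1) :=
  \matrix_(i < n, j < n.+1)
    if (i < j)%N then - simplex_a n i / (n - i)%:R
    else if (i == j :> nat) then simplex_a n i else 0.

Definition e1 (n : nat) : 'cV[R]_n := \col_(k < n) (if (k == 0 :> nat) then 1 else 0).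

Definition alpha_of (n : nat) (delta : R) : R :=
  n%:R / Num.sqrt (n%:R ^+ 2 * delta ^+ 2 - 2 * n%:R * delta + n%:R ^+ 2).

Definition Pdelta_col (n : nat) (delta : R) (j : 'I_n.+1) : 'cV[R]_n :=
  if (j == 0 :> nat) then col j (unif_simplex n)
  else alpha_of n delta *: (col j (unif_simplex n) + delta *: e1 n).

Definition delta_of (n : nat) (c : R) : R :=
  1 / n%:R + Num.sqrt (- ((n%:R ^+ 2 - 1) * (c ^+ 4 - c ^+ 2))) / (n%:R * (c ^+ 2 - 1)).

End Defs.

Arguments Pdelta_col {R} n delta j.
Arguments e1 {R} n.
Arguments unif_simplex {R} n.
Arguments alpha_of {R} n delta.
Arguments simplex_a {R} n i0.

(* Main.v *)
Require Import Defs.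
From HB Require Import structures.
From mathcomp Require Import all_boot all_order all_algebra.
From mathcomp Require Import reals ring lra zify.
Import Order.TTheory GRing.Theory Num.Theory.
Local Open Scope ring_scope.
Set Implicit Arguments. Unset Strict Implicit. Unset Printing Implicit Defensive.
Definition Ent (R : realType) (n k j : nat) : R :=
  if (k < j)%N then - simplex_a n k / (n - k)%:R
  else if (k == j) then simplex_a n k else 0.

Lemma unifE (R : realType) n (i : 'I_n) (j : 'I_n.+1) :
  unif_simplex n i j = Ent R n i j.
Proof. by rewrite /unif_simplex mxE. Qed.

Lemma a_sq (R : realType) n k : (k < n)%N -> (0 < n)%N ->
  simplex_a n k ^+ 2 = ((n - k)%:R * (n%:R + 1)) / (n%:R * ((n - k)%:R + 1)) :> R.
Proof.
move=> kn n0; rewrite /simplex_a sqr_sqrtr; last first.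
  by rewrite divr_ge0 // ?mulr_ge0.
by rewrite -!natr1.
Qed.

Lemma rowsum (R : realType) n k : (k < n)%N ->
  \sum_(j < n.+1) Ent R n k j = 0.
Proof.
move=> kn.
rewrite -(big_mkord xpredT (fun j => Ent R n k j)).
rewrite (big_cat_nat (n:=k)) /=; try lia.
rewrite [X in _ + X](big_cat_nat (n:=k.+1)) /=; try lia.
rewrite big_nat1.
rewrite big_nat_cond big1 ?add0r; last first.
  move=> j /andP[/andP[_ jk] _]; rewrite /Ent ltnNge (ltnW jk) /=.
  by rewrite eq_sym (ltn_eqF jk).
rewrite (eq_big_nat _ _ (F2 := fun _ => - simplex_a n k / (n - k)%:R)); last first.
  by move=> j /andP[kj _]; rewrite /Ent kj.
rewrite sumr_const_nat /Ent ltnn eqxx.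
have -> : (n.+1 - k.+1 = n - k)%N by [].
have nk : (n - k)%:R != 0 :> R by rewrite pnatr_eq0 subn_eq0 -ltnNge.
rewrite -[_ *+ (n - k)]mulr_natr; field; exact: nk.
Qed.

Lemma split3 (R : realType) (N k : nat) (F : nat -> R) : (k < N)%N ->
  \sum_(j < N) F j = \sum_(0 <= j < k) F j + F k + \sum_(k.+1 <= j < N) F j.
Proof.
move=> kN; rewrite -(big_mkord xpredT F).
rewrite (big_cat_nat (n:=k)) /=; try lia.
rewrite [X in _ + X](big_cat_nat (n:=k.+1)) /=; try lia.
by rewrite big_nat1 addrA.
Qed.

Lemma rowdot (R : realType) n k l : (k < n)%N -> (l < n)%N ->
  \sum_(j < n.+1) Ent R n k j * Ent R n l j = if k == l then (n%:R + 1) / n%:R else 0.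
Proof.
move=> kn ln.
have gen : forall k l, (k < l)%N -> (l < n)%N ->
    \sum_(j < n.+1) Ent R n k j * Ent R n l j = 0.
  move=> k' l' kl l'n.
  rewrite (eq_bigr (fun j : 'I_n.+1 => (- simplex_a n k' / (n - k')%:R) * Ent R n l' j)).
    by rewrite -mulr_sumr rowsum // mulr0.
  move=> j _; rewrite {1}/Ent.
  case: (ltnP k' j) => kj; first by [].
  have jl : (j < l')%N by apply: leq_ltn_trans kl.
  by rewrite /Ent (ltnNge l' j) (ltnW jl) /= (gtn_eqF jl) !mulr0.
case: (ltngtP k l) => [kl|lk|<-].
- by rewrite ?(ltn_eqF kl) gen.
- rewrite ?(gtn_eqF lk) (eq_bigr (fun j : 'I_n.+1 => Ent R n l j * Ent R n k j)) ?gen // => j _; exact: mulrC.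
rewrite ?eqxx (@split3 R n.+1 k (fun j => Ent R n k j * Ent R n k j)) //; last lia.
rewrite big_nat_cond big1 ?add0r; last first.
  move=> j /andP[/andP[_ jk] _]; rewrite /Ent ltnNge (ltnW jk) /=.
  by rewrite eq_sym (ltn_eqF jk) mulr0.
rewrite (eq_big_nat _ _ (F2 := fun _ => (- simplex_a n k / (n - k)%:R)^+2)); last first.
  by move=> j /andP[kj _]; rewrite /Ent kj expr2.
rewrite sumr_const_nat /Ent ltnn eqxx -expr2.
have -> : (n.+1 - k.+1 = n - k)%N by [].
have n0 : (0 < n)%N by lia.
have nk : (n - k)%:R != 0 :> R by rewrite pnatr_eq0 subn_eq0 -ltnNge.
have nn : n%:R != 0 :> R by rewrite pnatr_eq0 -lt0n.
rewrite -[_ *+ (n - k)]mulr_natr mulNr sqrrN expr_div_n a_sq //.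
field.
rewrite nn nk /=.
have : (n - k)%:R + 1 != 0 :> R by rewrite natr1 pnatr_eq0.
by move=> ->.
Qed.

Lemma telesc (R : realType) n i : (0 < n)%N -> (i <= n)%N ->
  \sum_(0 <= k < i) (simplex_a n k / (n - k)%:R) ^+ 2
    = (n%:R + 1) / (n%:R * ((n - i)%:R + 1)) - 1 / n%:R :> R.
Proof.
move=> n0; elim: i => [|i IH] ilt.
  rewrite big_nil subn0; field.
  have nn : n%:R != 0 :> R by rewrite pnatr_eq0 -lt0n.
  by rewrite nn natr1 pnatr_eq0.
rewrite big_nat_recr //= IH; last lia.
rewrite expr_div_n a_sq //.
have e : (n - i = (n - i.+1).+1)%N by lia.
rewrite e -natr1.
have nn : n%:R != 0 :> R by rewrite pnatr_eq0 -lt0n.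
have m1 : (n - i.+1)%:R + 1 != 0 :> R by rewrite natr1 pnatr_eq0.
have m2 : (n - i.+1)%:R + 1 + 1 != 0 :> R.
  by rewrite natr1 natr1 pnatr_eq0.
field.
by rewrite nn m1 m2.
Qed.

Lemma coldot_le (R : realType) n i j : (0 < n)%N -> (i <= j)%N -> (j <= n)%N ->
  \sum_(k < n) Ent R n k i * Ent R n k j = if i == j then 1 else - 1 / n%:R.
Proof.
move=> n0 ij jn.
have nn : n%:R != 0 :> R by rewrite pnatr_eq0 -lt0n.
case: (ltnP i n) => iN; last first.
  have ein : i = n by lia.
  have ejn : j = n by lia.
  subst i j; rewrite eqxx -(big_mkord xpredT (fun k => Ent R n k n * Ent R n k n)).
  rewrite (eq_big_nat _ _ (F2 := fun k => (simplex_a n k / (n - k)%:R) ^+ 2)); last first.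
    by move=> k /andP[_ kn]; rewrite /Ent kn mulNr mulrNN expr2.
  rewrite telesc // subnn; field; by rewrite nn.
rewrite (@split3 R n i (fun k => Ent R n k i * Ent R n k j)) //.
rewrite [X in _ + X]big_nat_cond [X in _ + X]big1 ?addr0; last first.
  move=> k /andP[/andP[ik _] _]; rewrite /Ent ltnNge (ltnW ik) /=.
  by rewrite (gtn_eqF ik) mul0r.
rewrite (eq_big_nat _ _ (F2 := fun k => (simplex_a n k / (n - k)%:R) ^+ 2)); last first.
  move=> k /andP[_ ki]; rewrite /Ent ki.
  have -> : (k < j)%N by lia.
  by rewrite mulNr mulrNN expr2.
rewrite telesc //; last lia.
have nk : (n - i)%:R != 0 :> R by rewrite pnatr_eq0 subn_eq0 -ltnNge.
have nk1 : (n - i)%:R + 1 != 0 :> R by rewrite natr1 pnatr_eq0.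
rewrite /Ent ltnn eqxx.
case: (ltngtP i j) => [ij'|ji|eij]; last first.
- rewrite -expr2 a_sq //; field; by rewrite nn nk1.
- lia.
- have -> : simplex_a n i * (- simplex_a n i / (n - i)%:R) = - (simplex_a n i ^+ 2) / (n - i)%:R :> R by rewrite expr2; field; exact: nk.
  rewrite a_sq //; field; by rewrite nn nk nk1.
Qed.

Lemma dotvC (R : realType) n (u v : 'cV[R]_n) : dotv u v = dotv v u.
Proof. by apply: eq_bigr => k _; rewrite mulrC. Qed.

Lemma dotvDr (R : realType) n (u v w : 'cV[R]_n) : dotv u (v + w) = dotv u v + dotv u w.
Proof. by rewrite /dotv -big_split; apply: eq_bigr => k _; rewrite mxE mulrDr. Qed.

Lemma dotvZr (R : realType) n (a : R) (u v : 'cV[R]_n) : dotv u (a *: v) = a * dotv u v.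
Proof. by rewrite /dotv mulr_sumr; apply: eq_bigr => k _; rewrite mxE mulrCA. Qed.

Lemma dotvNr (R : realType) n (u v : 'cV[R]_n) : dotv u (- v) = - dotv u v.
Proof. by rewrite -scaleN1r dotvZr mulN1r. Qed.

Lemma dotv_sumr (R : realType) n m (P : pred 'I_m) (u : 'cV[R]_n) (F : 'I_m -> 'cV[R]_n) :
  dotv u (\sum_(i < m | P i) F i) = \sum_(i < m | P i) dotv u (F i).
Proof.
rewrite /dotv (exchange_big _ _ _ P xpredT) /=; apply: eq_bigr => k _.
by rewrite summxE mulr_sumr.
Qed.

Lemma dotvDl (R : realType) n (u v w : 'cV[R]_n) : dotv (v + w) u = dotv v u + dotv w u.
Proof. by rewrite dotvC dotvDr dotvC (dotvC w). Qed.
Lemma dotvZl (R : realType) n (a : R) (u v : 'cV[R]_n) : dotv (a *: v) u = a * dotv v u.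
Proof. by rewrite dotvC dotvZr dotvC. Qed.
Lemma dotvNl (R : realType) n (u v : 'cV[R]_n) : dotv (- v) u = - dotv v u.
Proof. by rewrite dotvC dotvNr dotvC. Qed.
Lemma dotv_suml (R : realType) n m (P : pred 'I_m) (u : 'cV[R]_n) (F : 'I_m -> 'cV[R]_n) :
  dotv (\sum_(i < m | P i) F i) u = \sum_(i < m | P i) dotv (F i) u.
Proof. by rewrite dotvC dotv_sumr; apply: eq_bigr => i _; rewrite dotvC. Qed.

Lemma dotv_ge0 (R : realType) n (u : 'cV[R]_n) : 0 <= dotv u u.
Proof. by apply: sumr_ge0 => k _; rewrite -expr2 sqr_ge0. Qed.

Lemma gram (R : realType) n (i j : 'I_n.+1) : (0 < n)%N ->
  dotv (col i (unif_simplex n)) (col j (unif_simplex n)) =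
  if i == j then 1 else - 1 / n%:R :> R.
Proof.
move=> n0.
have H : forall i j : 'I_n.+1, (i <= j)%N -> dotv (col i (unif_simplex n)) (col j (unif_simplex n)) =
  if i == j then 1 else - 1 / n%:R :> R.
  move=> i' j' ij; rewrite /dotv.
  rewrite (eq_bigr (fun k : 'I_n => Ent R n k i' * Ent R n k j')); last first.
    by move=> k _; rewrite !mxE.
  by rewrite coldot_le // -ltnS.
case: (leqP i j) => ij; first exact: H.
by rewrite dotvC H ?(ltnW ij) // eq_sym.
Qed.

Lemma col0E (R : realType) n : (0 < n)%N -> col ord0 (unif_simplex n) = e1 n :> 'cV[R]_n.
Proof.
move=> n0; apply/matrixP => k z; rewrite !mxE /=.
case: eqP => // ->.
rewrite /simplex_a subn0 -natr1 divff ?sqrtr1 //.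
by rewrite natr1 mulf_neq0 // pnatr_eq0 -?lt0n.
Qed.

Lemma sumcol (R : realType) n : \sum_(j < n.+1) col j (unif_simplex n) = 0 :> 'cV[R]_n.
Proof.
apply/matrixP => k z; rewrite summxE mxE.
rewrite (eq_bigr (fun j : 'I_n.+1 => Ent R n k j)) ?rowsum //.
by move=> j _; rewrite !mxE.
Qed.

Lemma frame (R : realType) n (v : 'cV[R]_n) : (0 < n)%N ->
  v = (n%:R / (n%:R + 1)) *: \sum_(j < n.+1) dotv (col j (unif_simplex n)) v *: col j (unif_simplex n).
Proof.
move=> n0; apply/matrixP => k z; rewrite ord1 mxE summxE.
rewrite (eq_bigr (fun j : 'I_n.+1 => \sum_(l < n) v l 0 * (Ent R n l j * Ent R n k j))); last first.
  move=> j _; rewrite !mxE /dotv mulr_suml; apply: eq_bigr => l _.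
  by rewrite !mxE /Ent; ring.
rewrite (exchange_big _ (index_enum _) (index_enum _)) /=.
rewrite (eq_bigr (fun l : 'I_n => v l 0 * (if l == k then (n%:R + 1) / n%:R else 0))); last first.
  by move=> l _; rewrite -mulr_sumr rowdot.
rewrite (bigD1 k) //= eqxx big1 ?addr0; last first.
  by move=> l /negbTE ->; rewrite mulr0.
have nn : n%:R != 0 :> R by rewrite pnatr_eq0 -lt0n.
have n1 : n%:R + 1 != 0 :> R by rewrite natr1 pnatr_eq0.
field; by rewrite nn n1.
Qed.

Lemma real_facts (R : realType) n (c : R) : (2 <= n)%N -> 0 < c -> c <= 1 / n%:R ->
  let delta := delta_of n c in let alpha := alpha_of n delta in
  0 <= delta /\ delta < 1 / n%:R /\ 0 < alpha /\
      alpha ^+ 2 * (delta ^+ 2 - 2 * delta / n%:R + 1) = 1 /\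
      alpha * (1 / n%:R - delta) = c /\
      alpha ^+ 2 * (n%:R ^+ 2 - 1) = n%:R ^+ 2 * (1 - c ^+ 2).
Proof.
move=> n2 c0 cn delta alpha.
set N := n%:R.
have N2 : 2 <= N by rewrite /N (ler_nat R 2 n).
have N0 : N != 0 by apply/negP => /eqP e; move: N2; rewrite e; lra.
have cN : c * N <= 1.
  by move: cn; rewrite ler_pdivlMr ?mul1r //; lra.
have c1 : c < 1 by nra.
set arg := - ((N ^+ 2 - 1) * (c ^+ 4 - c ^+ 2)).
have argE : arg = (N ^+ 2 - 1) * c ^+ 2 * (1 - c ^+ 2) by rewrite /arg; ring.
have arg0 : 0 < arg.
  rewrite argE; apply: mulr_gt0; first apply: mulr_gt0; try nra.
set s := Num.sqrt arg.
have s0 : 0 < s by rewrite /s sqrtr_gt0.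
have s2 : s ^+ 2 = arg by rewrite /s sqr_sqrtr // ltW.
have c21 : 1 - c ^+ 2 != 0 by apply/negP => /eqP e; nra.
have dE : delta = 1 / N - s / (N * (1 - c ^+ 2)).
  rewrite /delta /delta_of -/N -/arg -/s.
  have c21' : c ^+ 2 - 1 != 0 by apply/negP => /eqP e; nra.
  field; by rewrite N0 c21 c21'.
set tau := s / (N * (1 - c ^+ 2)).
have tau0 : 0 < tau by rewrite /tau divr_gt0 // mulr_gt0; nra.
have tau2 : tau ^+ 2 * N ^+ 2 = (N ^+ 2 - 1) * c ^+ 2 / (1 - c ^+ 2).
  rewrite /tau expr_div_n s2 argE; field; by rewrite N0 c21.
set Q := N ^+ 2 * delta ^+ 2 - 2 * N * delta + N ^+ 2.
have QE : Q = (N ^+ 2 - 1) / (1 - c ^+ 2).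
  have -> : Q = tau ^+ 2 * N ^+ 2 + N ^+ 2 - 1.
    rewrite /Q dE -/tau; field; exact: N0.
  rewrite tau2; field; exact: c21.
have Q0 : 0 < Q by rewrite QE divr_gt0; nra.
have aE : alpha = N / Num.sqrt Q by [].
have sQ : 0 < Num.sqrt Q by rewrite sqrtr_gt0.
have a0 : 0 < alpha by rewrite aE divr_gt0 //; lra.
have a2 : alpha ^+ 2 = N ^+ 2 / Q.
  rewrite aE expr_div_n sqr_sqrtr //; exact: ltW.
have a2' : alpha ^+ 2 * (N ^+ 2 - 1) = N ^+ 2 * (1 - c ^+ 2).
  rewrite a2 QE; field.
  have : N ^+ 2 - 1 != 0 by apply/negP => /eqP e; nra.
  by move=> ->; rewrite c21.
have tauE : 1 / N - delta = tau by rewrite dE -/tau; ring.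
split; [ | split; [ | split; [ | split; [ | split]]]].
- rewrite dE -/tau subr_ge0.
  have : tau * N <= 1.
    have : (tau * N) ^+ 2 <= 1.
      rewrite exprMn tau2 ler_pdivrMr; last by nra.
      have cN2 : (c * N) ^+ 2 <= 1.
        have cN0 : 0 <= c * N by apply: mulr_ge0; lra.
        nra.
      rewrite exprMn in cN2; nra.
    move=> h; nra.
  by move=> h; rewrite ler_pdivlMr ?mul1r ?[N * _]mulrC //; lra.
- by rewrite dE -/tau; lra.
- exact: a0.
- rewrite a2.
  have -> : delta ^+ 2 - 2 * delta / N + 1 = Q / N ^+ 2 by rewrite /Q; field.
  field; apply/andP; split => //; exact: lt0r_neq0.
- rewrite tauE.
  have h : (alpha * tau) ^+ 2 = c ^+ 2.
    rewrite exprMn.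
    have -> : tau ^+ 2 = (N ^+ 2 - 1) * c ^+ 2 / (1 - c ^+ 2) / N ^+ 2.
      rewrite -tau2; field; exact: N0.
    rewrite a2 QE; field.
    have : N ^+ 2 - 1 != 0 by apply/negP => /eqP e; nra.
    by move=> ->; rewrite c21 N0.
  have at0 : 0 < alpha * tau by apply: mulr_gt0.
  nra.
- exact: a2'.
Qed.

Lemma sum_constE (R : realType) m (a : R) : \sum_(i < m) a = m%:R * a.
Proof. by rewrite sumr_const card_ord mulr_natl. Qed.

Lemma le_bigmax_gen (R : realType) m (F : 'I_m -> R) x0 i :
  F i <= \big[Num.max/x0]_(j < m) F j.
Proof.
have H : forall s : seq 'I_m, i \in s -> F i <= \big[Num.max/x0]_(j <- s) F j.
  elim=> [//|a s IH]; rewrite in_cons big_cons => /orP [/eqP ->|/IH h].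
    by rewrite le_max lexx.
  by rewrite le_max h orbT.
by apply: H; rewrite mem_index_enum.
Qed.

Lemma bigmax_le_gen (R : realType) m (F : 'I_m -> R) x0 c :
  x0 <= c -> (forall i, F i <= c) -> \big[Num.max/x0]_(j < m) F j <= c.
Proof.
move=> h0 h; elim/big_ind: _ => // x y hx hy.
by rewrite ge_max hx hy.
Qed.

Lemma sq_sum_le (R : realType) m (y : 'I_m -> R) : (forall i, 0 <= y i) ->
  \sum_(i < m) y i ^+ 2 <= (\sum_(i < m) y i) ^+ 2.
Proof.
move=> y0; rewrite expr2 mulr_suml; apply: ler_sum => i _.
rewrite expr2 ler_wpM2l //.
rewrite (bigD1 i) //= lerDl; apply: sumr_ge0 => j _; exact: y0.
Qed.

Lemma sumsq_bound (R : realType) m (x : 'I_m -> R) M : (0 < m)%N ->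
  (forall i, x i < M) -> \sum_(i < m) x i = 0 ->
  0 < M /\ \sum_(i < m) x i ^+ 2 <= m%:R * (m%:R - 1) * M ^+ 2.
Proof.
move=> m0 hx hs.
have sy : \sum_(i < m) (M - x i) = m%:R * M by rewrite sumrB hs subr0 sum_constE.
have mR : 0 < m%:R :> R by rewrite ltr0n.
have M0 : 0 < M.
  have : 0 < \sum_(i < m) (M - x i).
    rewrite (bigD1 (Ordinal m0)) //=; apply: ltr_pwDl.
      by rewrite subr_gt0.
    by apply: sumr_ge0 => j _; rewrite subr_ge0 ltW.
  rewrite sy => h; by rewrite (pmulr_rgt0 _ mR) in h.
split => //.
have e : \sum_(i < m) x i ^+ 2 = \sum_(i < m) (M - x i) ^+ 2 - m%:R * M ^+ 2.
  rewrite (eq_bigr (fun i => (M - x i) ^+ 2 + (2 * M) * x i - M ^+ 2)); last first.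
    by move=> i _; ring.
  by rewrite sumrB big_split /= -mulr_sumr hs mulr0 addr0 sum_constE.
rewrite e.
have y0 : forall i, 0 <= M - x i by move=> i; rewrite subr_ge0 ltW.
have := sq_sum_le y0; rewrite sy => h; nra.
Qed.

Lemma pos_span_of (R : realType) n m (f : 'I_m -> 'cV[R]_n) (beta gam : 'I_m -> R) v :
  v = \sum_(i < m) beta i *: f i -> (forall i, 0 < gam i) ->
  \sum_(i < m) gam i *: f i = 0 -> pos_span f predT v.
Proof.
move=> hv hg hz.
pose t := \sum_(k < m) `|beta k| / gam k.
exists (fun i => beta i + t * gam i); split.
  move=> i.
  have h1 : `|beta i| / gam i <= t.
    by rewrite /t (bigD1 i) //= lerDl; apply: sumr_ge0 => k _; rewrite divr_ge0 // ltW.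
  have h2 : `|beta i| <= t * gam i by rewrite -ler_pdivrMr.
  have h3 : - beta i <= `|beta i| by rewrite -normrN ler_norm.
  lra.
rewrite (eq_bigr (fun i => beta i *: f i + t *: (gam i *: f i))); last first.
  by move=> i _; rewrite scalerDl scalerA.
by rewrite big_split /= -scaler_sumr hz scaler0 addr0.
Qed.

Lemma nonred (R : realType) n m (f : 'I_m -> 'cV[R]_n) (z : 'cV[R]_n) i :
  (forall j, j != i -> dotv z (f j) <= 0) -> 0 < dotv z (f i) ->
  ~ pos_span f (fun j => f j != f i) (f i).
Proof.
move=> hj hi [lam [lam0 e]].
move: hi; rewrite {1}e dotv_sumr.
have : \sum_(j < m | f j != f i) dotv z (lam j *: f j) <= 0.
  apply: sumr_le0 => j fj; rewrite dotvZr.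
  have ji : j != i by apply: contraNneq fj => ->.
  by rewrite mulr_ge0_le0 // hj.
by move=> h1 h2; move: (lt_le_trans h2 h1); rewrite ltxx.
Qed.

Lemma pcol0 (R : realType) n (delta : R) :
  Pdelta_col n delta ord0 = col ord0 (unif_simplex n).
Proof. by rewrite /Pdelta_col. Qed.

Lemma pcolS (R : realType) n (delta : R) i : (0 < n)%N ->
  Pdelta_col n delta (lift ord0 i) =
  alpha_of n delta *: (col (lift ord0 i) (unif_simplex n) + delta *: col ord0 (unif_simplex n)).
Proof. by move=> n0; rewrite /Pdelta_col /= col0E. Qed.

Lemma gramS0 (R : realType) n (k : 'I_n) : (0 < n)%N ->
  dotv (col (lift ord0 k) (unif_simplex n)) (col ord0 (unif_simplex n)) = - 1 / n%:R :> R.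
Proof. by move=> n0; rewrite gram // eq_sym (negbTE (neq_lift _ _)). Qed.

Lemma gram0S (R : realType) n (k : 'I_n) : (0 < n)%N ->
  dotv (col ord0 (unif_simplex n)) (col (lift ord0 k) (unif_simplex n)) = - 1 / n%:R :> R.
Proof. by move=> n0; rewrite dotvC gramS0. Qed.

Lemma gramdiag (R : realType) n (k : 'I_n.+1) : (0 < n)%N ->
  dotv (col k (unif_simplex n)) (col k (unif_simplex n)) = 1 :> R.
Proof. by move=> n0; rewrite gram // eqxx. Qed.

Lemma pdot (R : realType) n (delta : R) (j : 'I_n.+1) (u : 'cV[R]_n) : (0 < n)%N ->
  dotv (Pdelta_col n delta j) u =
  if j == ord0 then dotv (col ord0 (unif_simplex n)) u
  else alpha_of n delta * (dotv (col j (unif_simplex n)) u + delta * dotv (col ord0 (unif_simplex n)) u).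
Proof.
move=> n0; case: (unliftP ord0 j) => [k ->|->]; last by rewrite eqxx pcol0.
by rewrite eq_sym (negbTE (neq_lift _ _)) pcolS // dotvZl dotvDl dotvZl.
Qed.

Lemma pnorm (R : realType) n (delta : R) j : (0 < n)%N ->
  alpha_of n delta ^+ 2 * (delta ^+ 2 - 2 * delta / n%:R + 1) = 1 ->
  normv (Pdelta_col n delta j) = 1.
Proof.
move=> n0 ha; rewrite /normv.
suff -> : dotv (Pdelta_col n delta j) (Pdelta_col n delta j) = 1 by rewrite sqrtr1.
case: (unliftP ord0 j) => [k ->|->]; last by rewrite pcol0 gramdiag.
rewrite pcolS // dotvZl dotvZr !dotvDl !dotvDr !dotvZl !dotvZr gramdiag // gramdiag //.
rewrite gramS0 // gram0S // -[RHS]ha; ring.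
Qed.

Lemma final_contra (R : realType) (N c a u1 : R) : 2 <= N -> 0 < c -> c * N <= 1 -> 0 < a ->
  a ^+ 2 * (N ^+ 2 - 1) = N ^+ 2 * (1 - c ^+ 2) -> u1 < c ->
  0 < c * (1 + u1) / a ->
  (N + 1) / N * (1 - u1 ^+ 2) <= N * (N - 1) * (c * (1 + u1) / a) ^+ 2 -> False.
Proof.
move=> N2 c0 cN a0 ha u1c M0 hb.
have N0 : N != 0 by apply/negP => /eqP e; move: N2; rewrite e; lra.
have a0' : a != 0 by rewrite lt0r_neq0.
have pu : 0 < 1 + u1.
  move: M0; rewrite pmulr_lgt0 ?invr_gt0 // pmulr_rgt0 //.
have h1 : (1 - u1 ^+ 2) * (1 - c ^+ 2) <= (N - 1) ^+ 2 * c ^+ 2 * (1 + u1) ^+ 2.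
  have NN : 0 < N ^+ 2 - 1 by nra.
  have e : (N + 1) / N * (1 - u1 ^+ 2) * (a ^+ 2 * N) = (N + 1) * (1 - u1 ^+ 2) * a ^+ 2.
    by field.
  have e2 : N * (N - 1) * (c * (1 + u1) / a) ^+ 2 * (a ^+ 2 * N) = N ^+ 2 * (N - 1) * c ^+ 2 * (1 + u1) ^+ 2.
    by field.
  have aN : 0 < a ^+ 2 * N by apply: mulr_gt0; [apply: exprn_gt0 | lra].
  have := ler_pM2r aN; move=> /(_ ((N + 1) / N * (1 - u1 ^+ 2)) (N * (N - 1) * (c * (1 + u1) / a) ^+ 2)).
  rewrite hb e e2 => /esym h.
  have a2 : a ^+ 2 = N ^+ 2 * (1 - c ^+ 2) / (N ^+ 2 - 1).
    rewrite -ha; field; by rewrite lt0r_neq0.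
  rewrite a2 in h.
  have e3 : (N + 1) * (1 - u1 ^+ 2) * (N ^+ 2 * (1 - c ^+ 2) / (N ^+ 2 - 1)) =
     N ^+ 2 * ((1 - u1 ^+ 2) * (1 - c ^+ 2)) / (N - 1).
    have N1 : N - 1 != 0 by apply/negP => /eqP e'; lra.
    have N1' : N + 1 != 0 by apply/negP => /eqP e'; lra.
    field; rewrite N1 /=.
    have -> : N ^+ 2 - 1 = (N - 1) * (N + 1) by ring.
    by rewrite mulf_neq0.
  rewrite e3 in h.
  have N1p : 0 < N - 1 by lra.
  have : N ^+ 2 * ((1 - u1 ^+ 2) * (1 - c ^+ 2)) <= N ^+ 2 * ((N - 1) ^+ 2 * c ^+ 2 * (1 + u1) ^+ 2).
    move: h; rewrite ler_pdivrMr // => h.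
    have -> : N ^+ 2 * ((N - 1) ^+ 2 * c ^+ 2 * (1 + u1) ^+ 2) = N ^+ 2 * (N - 1) * c ^+ 2 * (1 + u1) ^+ 2 * (N - 1) by ring.
    by rewrite -h.
  by rewrite ler_pM2l // exprn_gt0 //; lra.
have h2 : (1 - u1) * (1 - c ^+ 2) <= (N - 1) ^+ 2 * c ^+ 2 * (1 + u1).
  have e : (1 - u1 ^+ 2) * (1 - c ^+ 2) = (1 + u1) * ((1 - u1) * (1 - c ^+ 2)) by ring.
  have e' : (N - 1) ^+ 2 * c ^+ 2 * (1 + u1) ^+ 2 = (1 + u1) * ((N - 1) ^+ 2 * c ^+ 2 * (1 + u1)) by ring.
  by move: h1; rewrite e e' ler_pM2l.
have c1 : c < 1 by nra.
have k1 : (N - 1) * c <= 1 - c by nra.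
have k2 : (N - 1) ^+ 2 * c ^+ 2 <= (1 - c) ^+ 2.
  have k0 : 0 <= (N - 1) * c by apply: mulr_ge0; lra.
  rewrite -exprMn; nra.
have k3 : (1 - c) * (1 - c ^+ 2) < (1 - u1) * (1 - c ^+ 2) by rewrite ltr_pM2r; nra.
have k4 : (N - 1) ^+ 2 * c ^+ 2 * (1 + u1) <= (N - 1) ^+ 2 * c ^+ 2 * (1 + c).
  by rewrite ler_wpM2l ?mulr_ge0 ?sqr_ge0 //; lra.
have k5 : (N - 1) ^+ 2 * c ^+ 2 * (1 + c) <= (1 - c) ^+ 2 * (1 + c).
  by rewrite ler_wpM2r //; lra.
have k6 : (1 - c) ^+ 2 * (1 + c) = (1 - c) * (1 - c ^+ 2) by ring.
lra.
Qed.

Lemma cos_lb (R : realType) n (c delta : R) (u : 'cV[R]_n) :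
  (2 <= n)%N -> 0 < c -> c <= 1 / n%:R -> 0 < alpha_of n delta ->
  alpha_of n delta ^+ 2 * (delta ^+ 2 - 2 * delta / n%:R + 1) = 1 ->
  alpha_of n delta * (1 / n%:R - delta) = c ->
  alpha_of n delta ^+ 2 * (n%:R ^+ 2 - 1) = n%:R ^+ 2 * (1 - c ^+ 2) ->
  normv u = 1 -> c <= cos_max (Pdelta_col n delta) u.
Proof.
move=> n2 c0 cn a0 hnorm hc ha2 hu.
have n0 : (0 < n)%N by lia.
set N : R := n%:R.
set a := alpha_of n delta.
have N2 : 2 <= N by rewrite /N (ler_nat R 2 n).
have N0 : N != 0 by apply/negP => /eqP e; move: N2; rewrite e; lra.
have cN : c * N <= 1 by move: cn; rewrite ler_pdivlMr ?mul1r //; lra.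
have uu : dotv u u = 1.
  by rewrite -(sqr_sqrtr (dotv_ge0 u)) -/(normv u) hu expr1n.
pose D : 'M[R]_(n, n.+1) := unif_simplex n.
pose u1 := dotv (col ord0 D) u.
have g0 : forall j, dotv (Pdelta_col n delta j) u / normv (Pdelta_col n delta j)
                     = dotv (Pdelta_col n delta j) u.
  by move=> j; rewrite pnorm // divr1.
rewrite leNgt; apply/negP => H.
have h0 : u1 < c.
  have := le_bigmax_gen (fun i => dotv (Pdelta_col n delta i) u / normv (Pdelta_col n delta i))
            (dotv (Pdelta_col n delta ord0) u / normv (Pdelta_col n delta ord0)) ord0.
  rewrite -/(cos_max _ _) g0 pdot // eqxx -/D -/u1 => h.
  exact: le_lt_trans h H.
pose x := fun i : 'I_n => dotv (col (lift ord0 i) D) u + u1 / N.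
pose M := c * (1 + u1) / a.
have hx : forall i, x i < M.
  move=> i.
  have := le_bigmax_gen (fun i => dotv (Pdelta_col n delta i) u / normv (Pdelta_col n delta i))
            (dotv (Pdelta_col n delta ord0) u / normv (Pdelta_col n delta ord0)) (lift ord0 i).
  rewrite -/(cos_max _ _) g0 pdot // eq_sym (negbTE (neq_lift _ _)) -/D -/u1 -/a => h.
  have h' := le_lt_trans h H.
  have a0' : a != 0 by rewrite lt0r_neq0.
  have e : x i = (a * (dotv (col (lift ord0 i) D) u + delta * u1)) / a + (a * (1 / N - delta)) / a * u1.
    rewrite /x; field; by rewrite a0' N0.
  rewrite e hc /M.
  have : a * (dotv (col (lift ord0 i) D) u + delta * u1) / a < c / a by rewrite ltr_pM2r ?invr_gt0.
  move=> h2.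
  have -> : c * (1 + u1) / a = c / a + c / a * u1 by field.
  lra.
have sd : \sum_(i < n) dotv (col (lift ord0 i) D) u = - u1.
  have := sumcol R n; rewrite -/D => hs.
  have : dotv (\sum_(j < n.+1) col j D) u = 0 by rewrite hs /dotv big1 // => k _; rewrite mxE mul0r.
  rewrite dotv_suml big_ord_recl -/u1 => h; lra.
have sx : \sum_(i < n) x i = 0.
  rewrite /x big_split /= sd sum_constE; field; exact: N0.
have fr := frame u n0.
have sq_all : \sum_(j < n.+1) dotv (col j D) u ^+ 2 = (N + 1) / N.
  have : dotv u u = N / (N + 1) * \sum_(j < n.+1) dotv (col j D) u ^+ 2.
    rewrite {2}fr dotvZr dotv_sumr; congr (_ * _); apply: eq_bigr => j _.
    by rewrite dotvZr dotvC expr2.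
  rewrite uu => h.
  have N1 : N + 1 != 0 by apply/negP => /eqP e; lra.
  have -> : \sum_(j < n.+1) dotv (col j D) u ^+ 2 = (N + 1) / N * (N / (N + 1) * \sum_(j < n.+1) dotv (col j D) u ^+ 2).
    field; by rewrite N0 N1.
  by rewrite -h mulr1.
have sq : \sum_(i < n) x i ^+ 2 = (N + 1) / N * (1 - u1 ^+ 2).
  move: sq_all; rewrite big_ord_recl -/u1 => hq.
  rewrite (eq_bigr (fun i => dotv (col (lift ord0 i) D) u ^+ 2 + (2 * u1 / N) * dotv (col (lift ord0 i) D) u + (u1 / N) ^+ 2)); last first.
    by move=> i _; rewrite /x; ring.
  rewrite !big_split /= -mulr_sumr sd sum_constE.
  have -> : \sum_(i < n) dotv (col (lift ord0 i) D) u ^+ 2 = (N + 1) / N - u1 ^+ 2 by rewrite -hq; ring.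
  field; exact: N0.
have [M0 hb] := sumsq_bound n0 hx sx.
rewrite sq -/N in hb.
exact: (final_contra N2 c0 cN a0 ha2 h0 M0 hb).
Qed.

Unset Implicit Arguments.

Theorem corollary2 (R : realType) (n : nat) (c : R) :
  (2 <= n)%N -> 0 < c -> c <= 1 / n%:R ->
  let delta := delta_of n c in
  0 <= delta /\ delta < 1 / n%:R /\
  positive_basis (Pdelta_col n delta) /\
  cosine_measure_is (Pdelta_col n delta) c.
Proof.
move=> n2 c0 cn delta.
have [hd0 [hd1 [ha0 [hnorm [hc ha2]]]]] := real_facts n2 c0 cn.
rewrite -/delta in hd0 hd1 ha0 hnorm hc ha2.
have n0 : (0 < n)%N by lia.
set N : R := n%:R.
have N2 : 2 <= N by rewrite /N (ler_nat R 2 n).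
have N0 : N != 0 by apply/negP => /eqP e; move: N2; rewrite e; lra.
have Npos : 0 < N by lra.
pose a := alpha_of n delta.
have a0' : a != 0 by rewrite lt0r_neq0.
pose D : 'M[R]_(n, n.+1) := unif_simplex n.
have Lf : forall k : 'I_n, (lift ord0 k == ord0) = false.
  by move=> k; rewrite eq_sym (negbTE (neq_lift _ _)).
have sumS : \sum_(i < n) col (lift ord0 i) D = - col ord0 D.
  have := sumcol R n; rewrite big_ord_recl -/D => h.
  by apply/eqP; rewrite -addr_eq0 addrC h.
split => //; split => //; split.
- split.
  + move=> v.
    pose beta := fun j : 'I_n.+1 => N / (N + 1) * dotv (col j D) v.
    have hv : v = \sum_(j < n.+1) beta j *: col j D.
      rewrite {1}(frame v n0) scaler_sumr; apply: eq_bigr => j _.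
      by rewrite scalerA.
    pose S := \sum_(i < n) beta (lift ord0 i).
    pose beta' := fun j : 'I_n.+1 => if j == ord0 then beta ord0 - delta * S else beta j / a.
    pose gam := fun j : 'I_n.+1 => if j == ord0 then a * (1 - N * delta) else 1.
    apply: (@pos_span_of R n n.+1 _ beta' gam).
    * rewrite {1}hv !big_ord_recl /beta' eqxx pcol0 -/D.
      have e : forall i, (if lift ord0 i == ord0 then beta ord0 - delta * S else beta (lift ord0 i) / a)
          *: Pdelta_col n delta (lift ord0 i) =
          beta (lift ord0 i) *: col (lift ord0 i) D + (delta * beta (lift ord0 i)) *: col ord0 D.
        move=> i; rewrite Lf pcolS // -/D -/a scalerA divfK // scalerDr scalerA.
        by rewrite [beta _ * delta]mulrC.
      rewrite (eq_bigr _ (fun i _ => e i)) big_split /= -scaler_suml -mulr_sumr -/S.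
      by rewrite scalerBl addrCA subrK addrC.
    * move=> j; rewrite /gam; case: eqP => _ //.
      apply: mulr_gt0 => //.
      have : N * delta < 1 by move: hd1; rewrite (ltr_pdivlMr _ _ Npos); lra.
      lra.
    * rewrite big_ord_recl /gam eqxx pcol0 -/D.
      rewrite (eq_bigr (fun i => a *: (col (lift ord0 i) D + delta *: col ord0 D))); last first.
        by move=> i _; rewrite Lf scale1r pcolS.
      rewrite -scaler_sumr big_split /= sumS sumr_const card_ord scalerMnl -mulr_natl -/N.
      rewrite -scaleN1r -scalerDl scalerA -scalerDl.
      have -> : a * (1 - N * delta) + a * (-1 + N * delta) = 0 by ring.
      by rewrite scale0r.
  + move=> i; apply: (@nonred R n n.+1 _ (col i D)).
    * move=> j ji; rewrite dotvC pdot // -/D -/a.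
      case: (unliftP ord0 i) ji => [m ->|->] ji.
      - case: (unliftP ord0 j) ji => [k ->|->] ji.
        + rewrite (Lf k) gram // gram0S //.
          have -> : (lift ord0 k == lift ord0 m) = false.
            by apply/negP => /eqP e; move: ji; rewrite e eqxx.
          rewrite -/N; apply: mulr_ge0_le0; first exact: ltW.
          have : 0 <= delta / N by rewrite divr_ge0 // ltW // ltr0n; lia.
          have -> : -1 / N + delta * (-1 / N) = - (1 / N) - delta / N by field.
          have : 0 < 1 / N by rewrite divr_gt0 // ltr0n; lia.
          lra.
        + rewrite eqxx gram0S // -/N.
          apply: mulr_le0_ge0; first lra.
          rewrite invr_ge0; lra.
      - case: (unliftP ord0 j) ji => [k ->|->] ji; last by rewrite eqxx in ji.
        rewrite Lf gramS0 // gramdiag // -/N mulr1.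
        apply: mulr_ge0_le0; first exact: ltW.
        have -> : -1 / N + delta = - (1 / N - delta) by ring.
        rewrite oppr_le0; lra.
    * rewrite dotvC pdot // -/D -/a.
      case: (unliftP ord0 i) => [m ->|->]; last by rewrite eqxx gramdiag.
      rewrite Lf gramdiag // gram0S // -/N; apply: mulr_gt0 => //.
      have : delta / N < 1.
        rewrite ltr_pdivrMr ?mul1r; last by rewrite ltr0n; lia.
        have : 1 / N <= 1 by rewrite ler_pdivrMr ?mul1r; lra.
        lra.
      have -> : 1 + delta * (-1 / N) = 1 - delta / N by field.
      lra.
- split.
  + exists (- col ord0 D); split.
      rewrite /normv dotvNl dotvNr opprK gramdiag //; exact: sqrtr1.
    have g : forall j, dotv (Pdelta_col n delta j) (- col ord0 D) / normv (Pdelta_col n delta j)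
              = if j == ord0 then -1 else c.
      move=> j; rewrite pnorm // divr1 pdot // -/D -/a.
      case: (unliftP ord0 j) => [k ->|->]; last by rewrite eqxx dotvNr gramdiag.
      rewrite Lf !dotvNr gramS0 // gramdiag // -hc -/N -/a; ring.
    apply/eqP; rewrite eq_le; apply/andP; split.
      rewrite /cos_max; apply: bigmax_le_gen => [|j]; rewrite g; first by rewrite eqxx; lra.
      by case: eqP => _; lra.
    have := le_bigmax_gen (fun i => dotv (Pdelta_col n delta i) (- col ord0 D) / normv (Pdelta_col n delta i))
            (dotv (Pdelta_col n delta ord0) (- col ord0 D) / normv (Pdelta_col n delta ord0)) (lift ord0 (Ordinal n0)).
    by rewrite g Lf.
  + move=> u hu; exact: cos_lb.
Qed.
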